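(* Let $G$ be a connected graph and let $v$ be a cut-vertex of $G$, where $G_1, \ldots, G_c$ are the connected components of $G - \{v\}$. Then for any minimal fort $F$ of $G$ with $v \notin F$, at most two indices $i$ satisfy $V(G_i) \cap F \neq \emptyset$.
   Context: Graphs are finite and simple. A fort of a graph $G$ is a nonempty set $F\subseteq V(G)$ such that every vertex outside $F$ is adjacent to either zero or at least two vertices of $F$; it is minimal if no proper subset is a fort. *)

(* Defs.v *)
(* A finite simple graph is a symmetric irreflexive
   relation e on a finType T. *)
From mathcomp Require Import all_boot.
Set Implicit Arguments. Unset Strict Implicit. Unset Printing Implicit Defensive.

Definition simple_graph (T : finType) (e : rel T) : Prop :=
  symmetric e /\ irreflexive e.

Definition connected_graph (T : finType) (e : rel T) : Prop :=
  forall x y : T, connect e x y.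

Definition fort (T : finType) (e : rel T) (F : {set T}) : Prop :=
  F != set0 /\
  forall u : T, u \notin F -> #|[set w in F | e u w]| != 1.

Definition minimal_fort (T : finType) (e : rel T) (F : {set T}) : Prop :=
  fort e F /\ forall F' : {set T}, F' \proper F -> ~ fort e F'.

Definition del_rel (T : finType) (e : rel T) (v : T) : rel T :=
  fun x y => [&& x != v, y != v & e x y].

Definition comps_del (T : finType) (e : rel T) (v : T) : {set {set T}} :=
  [set [set w | connect (del_rel e v) u w] | u in [set u | u != v]].

Definition cut_vertex (T : finType) (e : rel T) (v : T) : Prop :=
  1 < #|comps_del e v|.

(* Main.v *)
Require Import Defs.
From mathcomp Require Import all_boot.
Set Implicit Arguments. Unset Strict Implicit. Unset Printing Implicit Defensive.

Definition compv (T : finType) (e : rel T) (v u : T) : {set T} :=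
  [set w | connect (del_rel e v) u w].

Definition closedv (T : finType) (e : rel T) (v : T) (S : {set T}) : Prop :=
  forall x y, x \in S -> y != v -> e x y -> y \in S.

Lemma del_sym (T : finType) (e : rel T) v : symmetric e -> symmetric (del_rel e v).
Proof.
move=> se x y; rewrite /del_rel se.
by case: (x != v); case: (y != v).
Qed.

Lemma v_notin_comp (T : finType) (e : rel T) v u :
  symmetric e -> u != v -> v \notin compv e v u.
Proof.
move=> se uv; rewrite inE (sym_connect_sym (del_sym v se)).
apply/negP => /connectP [[|x p]] /=.
  by move=> _ E; rewrite E eqxx in uv.
by rewrite {1}/del_rel eqxx.
Qed.

Lemma comp_closed (T : finType) (e : rel T) v u :
  symmetric e -> u != v -> closedv e v (compv e v u).
Proof.
move=> se uv x y xS yv exy.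
have xv : x != v.
  by apply/negP => /eqP E; subst x; move: (v_notin_comp se uv); rewrite xS.
move: xS; rewrite !inE => cx.
apply: connect_trans cx (connect1 _).
by rewrite /del_rel xv yv exy.
Qed.

Lemma comp_eq (T : finType) (e : rel T) v u x :
  symmetric e -> x \in compv e v u -> compv e v u = compv e v x.
Proof.
move=> se; rewrite inE => cx; apply/setP => w; rewrite !inE.
apply/idP/idP => h.
  by apply: connect_trans h; rewrite (sym_connect_sym (del_sym v se)).
exact: connect_trans cx h.
Qed.

Lemma subfort (T : finType) (e : rel T) v (F S : {set T}) :
  symmetric e -> fort e F -> v \notin F -> closedv e v S -> v \notin S ->
  F :&: S != set0 -> #|[set w in F :&: S | e v w]| != 1 -> fort e (F :&: S).
Proof.
move=> se [_ fF] vF cS vS ne hv; split => // u uFS.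
case: (eqVneq u v) => [->|uv] //.
case uS: (u \in S).
  have uF : u \notin F by move: uFS; rewrite inE uS andbT.
  have -> : [set w in F :&: S | e u w] = [set w in F | e u w].
    apply/setP => w; rewrite !inE.
    case wF: (w \in F) => //=; case euw: (e u w); rewrite ?andbF ?andbT //=.
    apply: (cS u) => //.
    by apply/negP => /eqP E; subst w; rewrite wF in vF.
  exact: fF.
have -> : [set w in F :&: S | e u w] = set0.
  apply/setP => w; rewrite !inE.
  apply/negbTE/negP => /andP [/andP [_ wS] euw].
  by move/negP: uS; apply; apply: (cS w) => //; rewrite se.
by rewrite cards0.
Qed.

Lemma contra_min (T : finType) (e : rel T) v (F S : {set T}) x :
  symmetric e -> minimal_fort e F -> v \notin F -> closedv e v S -> v \notin S ->
  F :&: S != set0 -> x \in F -> x \notin S ->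
  #|[set w in F :&: S | e v w]| != 1 -> False.
Proof.
move=> se [fF mF] vF cS vS ne xF xS hv.
have h1 : F :&: S \proper F.
  rewrite properE subsetIl /=; apply/negP => /subsetP /(_ x xF).
  by rewrite inE (negbTE xS) andbF.
exact: (mF _ h1 (subfort se fF vF cS vS ne hv)).
Qed.

Theorem mainTheorem3 (T : finType) (e : rel T) (v : T) (F : {set T}) :
  simple_graph e -> connected_graph e -> cut_vertex e v ->
  minimal_fort e F -> v \notin F ->
  #|[set C in comps_del e v | C :&: F != set0]| <= 2.
Proof.
move=> [se _] _ _ mF vF.
rewrite leqNgt; apply/negP => /card_gt2P [C1 [C2 [C3 [[h1 h2 h3] [n12 n23 n31]]]]].
move: h1 h2 h3; rewrite !inE.
move=> /andP [/imsetP [u1 v1 E1] ne1] /andP [/imsetP [u2 v2 E2] ne2]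
       /andP [/imsetP [u3 v3 E3] ne3].
subst C1 C2 C3; rewrite !inE in v1 v2 v3.
rewrite -/(compv e v u1) -/(compv e v u2) -/(compv e v u3) in n12 n23 n31 ne1 ne2 ne3 *.
have disj : forall a b x, a != v -> b != v -> compv e v a != compv e v b ->
    x \in compv e v a -> x \notin compv e v b.
  move=> a b x _ _ nab xa; apply/negP => xb.
  by move: nab; rewrite (comp_eq se xa) (comp_eq se xb) eqxx.
have getx : forall a, compv e v a :&: F != set0 -> exists2 x, x \in F & x \in compv e v a.
  move=> a /set0Pn [x]; rewrite inE => /andP [xa xF]; by exists x.
have cF : forall a, compv e v a :&: F != set0 -> F :&: compv e v a != set0.
  by move=> a; rewrite setIC.
have single : forall a b, a != v -> b != v -> compv e v a != compv e v b ->
   compv e v a :&: F != set0 -> compv e v b :&: F != set0 ->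
   [set w in F :&: compv e v a | e v w] = set0 -> False.
  move=> a b av bv nab na nb E.
  have [x xF xb] := getx b nb.
  apply: (@contra_min T e v F (compv e v a) x se mF vF (comp_closed se av)
           (v_notin_comp se av) (cF a na) xF).
    by apply: disj xb; rewrite // eq_sym.
  by rewrite E cards0.
have [w1 w1i] : exists w, w \in [set w in F :&: compv e v u1 | e v w].
  apply/set0Pn/negP => /eqP E; exact: (single u1 u2 v1 v2 n12 ne1 ne2 E).
have [w2 w2i] : exists w, w \in [set w in F :&: compv e v u2 | e v w].
  apply/set0Pn/negP => /eqP E; exact: (single u2 u3 v2 v3 n23 ne2 ne3 E).
have [x xF x3] := getx u3 ne3.
have cl : closedv e v (compv e v u1 :|: compv e v u2).
  move=> a b; rewrite !in_setU => /orP [] ha bv eab.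
    by rewrite (comp_closed se v1 ha bv eab).
  by rewrite (comp_closed se v2 ha bv eab) orbT.
apply: (@contra_min T e v F _ x se mF vF cl).
- by rewrite inE negb_or (v_notin_comp se v1) (v_notin_comp se v2).
- apply/set0Pn; exists w1; move: w1i; rewrite !inE => /andP [/andP [-> ->] _].
  by [].
- exact: xF.
- rewrite inE negb_or (disj u3 u1) ?(disj u3 u2) //; by rewrite eq_sym.
- apply/negP => /eqP H.
  have : 1 < #|[set w in F :&: (compv e v u1 :|: compv e v u2) | e v w]|.
    apply/card_gt1P; exists w1, w2; move: w1i w2i; rewrite !inE.
    move=> /andP [/andP [f1 c1] e1] /andP [/andP [f2 c2] e2].
    rewrite f1 c1 e1 f2 c2 e2 orbT; split => //.
    apply/negP => /eqP E; subst w2.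
    have c1x : w1 \in compv e v u1 by rewrite inE.
    by move: (disj u1 u2 w1 v1 v2 n12 c1x); rewrite inE c2.
  by rewrite H.
Qed.
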